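(* For $0\le r\le\min\{m,n\}$, the monomials $\mathfrak{m}(\mathcal{R})$ for $\mathcal{R}\in\bigsqcup_{d=0}^{r}\mathcal{Z}_{n,m,d}$ descend to a spanning set of $R(\mathcal{Z}_{n,m,r})$. In particular $R(\mathcal{Z}_{n,m,r})_d=\{0\}$ for $d>r$.
   Context: Fix positive integers $n,m$. $\mathbb{C}[\mathbf{x}_{n\times m}]$ is the polynomial ring in variables $x_{i,j}$ ($1\le i\le n,1\le j\le m$). For finite $\mathcal{Z}\subseteq\mathrm{Mat}_{n\times m}(\mathbb{C})$, $\mathbf{I}(\mathcal{Z})$ is its vanishing ideal, $\mathrm{gr}\,\mathbf{I}(\mathcal{Z})$ the ideal generated by top-degree homogeneous components of its nonzero elements, and $R(\mathcal{Z})=\mathbb{C}[\mathbf{x}_{n\times m}]/\mathrm{gr}\,\mathbf{I}(\mathcal{Z})$, graded by degree. A rook placement on the $n\times m$ board is a subset $\mathcal{R}\subseteq[n]\times[m]$ with at most one element in each row and column, identified with its $0/1$ matrix; $\mathcal{Z}_{n,m,d}$ is the set of rook placements with exactly $d$ elements; $\mathfrak{m}(\mathcal{R}):=\prod_{(i,j)\in\mathcal{R}}x_{i,j}$. *)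

(* Defs.v *)
From HB Require Import structures.
From mathcomp Require Import all_boot all_algebra.
From mathcomp Require Import Rstruct.
From mathcomp Require Import complex.
From mathcomp Require Import mpoly.
From Stdlib Require Reals.

Set Implicit Arguments.
Unset Strict Implicit.
Unset Printing Implicit Defensive.

Import GRing.Theory.
Local Open Scope ring_scope.

Notation CC := (complex Rdefinitions.R).

(* C[x_{n x m}]: polynomial ring in the n*m variables x_{i,j}, the variable
   x_{i,j} being indexed by mxvec_index i j : 'I_(n*m). *)
Notation Pnm n m := {mpoly CC[n * m]}.

Definition xvar n m (i : 'I_n) (j : 'I_m) : Pnm n m := 'X_(mxvec_index i j).

Definition evalmx n m (A : 'M[CC]_(n, m)) (p : Pnm n m) : CC :=
  p.@[fun k => mxvec A 0 k].

Definition vanI n m (Z : 'M[CC]_(n, m) -> Prop) (p : Pnm n m) : Prop :=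
  forall A, Z A -> evalmx A p = 0.

Definition topc n m (p : Pnm n m) : Pnm n m :=
  \sum_(mm <- msupp p | mdeg mm == (msize p).-1) p@_mm *: 'X_[mm].

(* gr I: the ideal generated by the top-degree components of the nonzero
   elements of I, i.e. finite combinations  sum_k a_k * topc f_k. *)
Definition grI n m (I : Pnm n m -> Prop) (q : Pnm n m) : Prop :=
  exists s : seq (Pnm n m * Pnm n m),
    (forall x, x \in s -> I x.2 /\ x.2 != 0) /\
    q = \sum_(x <- s) x.1 * topc x.2.

Definition is_rook n m (R : {set 'I_n * 'I_m}) : bool :=
  [forall a in R, forall b in R, ((a.1 == b.1) || (a.2 == b.2)) ==> (a == b)].

Definition rook_mx n m (R : {set 'I_n * 'I_m}) : 'M[CC]_(n, m) :=
  \matrix_(i, j) (((i, j) \in R)%:R : CC).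

Definition Zrook n m (d : nat) (A : 'M[CC]_(n, m)) : Prop :=
  exists R : {set 'I_n * 'I_m}, [/\ is_rook R, #|R| = d & A = rook_mx R].

Definition rookmon n m (R : {set 'I_n * 'I_m}) : Pnm n m :=
  \prod_(a in R) xvar a.1 a.2.

(* Main.v *)
Require Import Defs.
From HB Require Import structures.
From mathcomp Require Import all_boot all_algebra.
From mathcomp Require Import Rstruct complex mpoly.
Set Implicit Arguments. Unset Strict Implicit. Unset Printing Implicit Defensive.
Import GRing.Theory.
Local Open Scope ring_scope.

Lemma grI0 n m (I : Pnm n m -> Prop) : grI I 0.
Proof. by exists [::]; split=> //; rewrite big_nil. Qed.

Lemma grID n m (I : Pnm n m -> Prop) p q : grI I p -> grI I q -> grI I (p + q).
Proof.
move=> [s [Hs ->]] [t [Ht ->]]; exists (s ++ t); split; last by rewrite big_cat.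
by move=> x; rewrite mem_cat => /orP[/Hs|/Ht].
Qed.

Lemma grIMl n m (I : Pnm n m -> Prop) h p : grI I p -> grI I (h * p).
Proof.
move=> [s [Hs ->]]; exists [seq (h * x.1, x.2) | x <- s]; split.
  by move=> x /mapP [y /Hs H ->].
by rewrite big_map mulr_sumr; apply: eq_bigr => x _; rewrite mulrA.
Qed.

Lemma grI_gen n m (I : Pnm n m -> Prop) h f : I f -> f != 0 -> grI I (h * topc f).
Proof.
by move=> If nf; exists [:: (h, f)]; split; [move=> x; rewrite inE => /eqP -> | rewrite big_seq1].
Qed.

Lemma topcX n m (mm : 'X_{1..(n * m)}) : topc ('X_[mm] : Pnm n m) = 'X_[mm].
Proof.
by rewrite /topc msuppX msizeX big_cons big_nil /= eqxx mcoeffX eqxx scale1r addr0.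
Qed.

Lemma coef_topc n m (p : Pnm n m) mm :
  (topc p)@_mm = if mdeg mm == (msize p).-1 then p@_mm else 0.
Proof.
rewrite /topc (big_morph (mcoeff mm) (mcoeffD mm) (mcoeff0 _ mm)) big_mkcond /=.
have H : forall x, (if mdeg x == (msize p).-1 then (p@_x *: 'X_[x] : Pnm n m)@_mm else 0)
   = if x == mm then (if mdeg mm == (msize p).-1 then p@_mm else 0) else 0.
  move=> x; rewrite mcoeffZ mcoeffX; case: (eqVneq x mm) => [->|ne]; first by rewrite mulr1.
  by case: ifP => _ //; rewrite mulr0.
under eq_bigr do rewrite H.
case: (boolP (mm \in msupp p)) => Hm.
  rewrite (bigD1_seq mm) //= ?msupp_uniq // eqxx big1 ?addr0 //.
  by move=> x /negbTE ->.
have H0 : p@_mm = 0 by apply/eqP; rewrite mcoeff_eq0.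
rewrite H0 if_same big1 //.
by move=> x _; rewrite if_same.
Qed.

Definition rmnm n m (S : {set 'I_n * 'I_m}) : 'X_{1..(n * m)} :=
  (\sum_(a in S) U_(mxvec_index a.1 a.2))%MM.

Lemma rookmonX n m (S : {set 'I_n * 'I_m}) : rookmon S = 'X_[rmnm S].
Proof.
rewrite /rookmon /rmnm (big_morph (fun mm => ('X_[mm] : Pnm n m)) (@mpolyXD _ _) (@mpolyX0 _ _)).
by [].
Qed.

Lemma mdeg_rmnm n m (S : {set 'I_n * 'I_m}) : mdeg (rmnm S) = #|S|.
Proof.
by rewrite /rmnm mdeg_sum (eq_bigr (fun _ => 1%N)) ?sum1_card // => a _; rewrite mdeg1.
Qed.

Lemma eval_rookmon n m (S R : {set 'I_n * 'I_m}) :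
  evalmx (rook_mx R) (rookmon S) = (S \subset R)%:R.
Proof.
rewrite /evalmx /rookmon (big_morph _ (@mevalM _ _ _) (@meval1 _ _ _)).
have E : forall a : 'I_n * 'I_m, meval (fun k => mxvec (rook_mx R) 0 k) (xvar a.1 a.2) = (a \in R)%:R.
  by move=> [i j]; rewrite /xvar mevalXU mxvecE mxE.
under eq_bigr do rewrite E.
case: (boolP (S \subset R)) => sub.
  by rewrite big1 // => a aS; rewrite (subsetP sub a aS).
have [a aS aR] : exists2 a, a \in S & a \notin R.
  by apply/exists_inP; move: sub; rewrite subset_disjoint disjoint_sym disjoint_subset => /subsetPn [a aS]; rewrite inE negbK => aR; apply/exists_inP; exists a.
by rewrite (bigD1 a) //= (negbTE aR) mul0r.
Qed.

Lemma is_rook_sub n m (S R : {set 'I_n * 'I_m}) : is_rook R -> S \subset R -> is_rook S.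
Proof.
move=> /forall_inP HR sub; apply/forall_inP => a aS; apply/forall_inP => b bS.
exact: (forall_inP (HR a (subsetP sub a aS)) b (subsetP sub b bS)).
Qed.

Lemma X_neq0 n m (mm : 'X_{1..(n * m)}) : ('X_[mm] : Pnm n m) != 0.
Proof. by rewrite -msupp_eq0 msuppX. Qed.

Lemma bad_set n m r (S : {set 'I_n * 'I_m}) (h : Pnm n m) :
  (forall R, is_rook R -> #|R| = r -> ~~ (S \subset R)) ->
  grI (vanI (Zrook r)) (h * rookmon S).
Proof.
move=> H; rewrite rookmonX -topcX; apply: grI_gen; last exact: X_neq0.
move=> A [R [rR cR ->]]; rewrite -rookmonX eval_rookmon.
by rewrite (negbTE (H R rR cR)).
Qed.

Lemma square n m r (k : 'I_(n * m)) (h : Pnm n m) :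
  grI (vanI (Zrook r)) (h * ('X_k * 'X_k)).
Proof.
pose f : Pnm n m := 'X_k * 'X_k - 'X_k.
have E : 'X_k * 'X_k = 'X_[(U_(k))%MM + (U_(k))%MM] :> Pnm n m by rewrite mpolyXD.
have Hc : forall mm, f@_mm = (((U_(k))%MM + (U_(k))%MM)%MM == mm)%:R - ((U_(k))%MM == mm)%:R.
  by move=> mm; rewrite /f E mcoeffB !mcoeffX.
have d2 : mdeg ((U_(k))%MM + (U_(k))%MM)%MM = 2%N by rewrite mdegD mdeg1.
have ne : ((U_(k))%MM + (U_(k))%MM)%MM != (U_(k))%MM.
  by apply/eqP => /(congr1 mdeg); rewrite d2 mdeg1.
have in2 : ((U_(k))%MM + (U_(k))%MM)%MM \in msupp f.
  by rewrite mcoeff_msupp Hc eqxx (eq_sym (U_(k))%MM) (negbTE ne) subr0 oner_eq0.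
have sz : (msize f).-1 = 2%N.
  apply/eqP; rewrite eqn_leq; apply/andP; split.
    rewrite msizeE; rewrite -subn1 leq_subLR addn2; apply/bigmax_leqP_seq => x xin _.
    move: xin; rewrite mcoeff_msupp Hc.
    case: (eqVneq ((U_(k))%MM + (U_(k))%MM)%MM x) => [<-|_]; first by rewrite d2.
    case: (eqVneq (U_(k))%MM x) => [<-|_]; first by rewrite mdeg1.
    by rewrite subrr eqxx.
  by have := msize_mdeg_lt in2; rewrite d2; case: (msize f) => // s.
have T : topc f = 'X_k * 'X_k.
  apply/mpolyP => mm; rewrite coef_topc sz Hc E mcoeffX.
  case: (eqVneq (mdeg mm) 2%N) => [dm|dm].
    have -> : ((U_(k))%MM == mm) = false by apply/negbTE/eqP => eU; move: dm; rewrite -eU mdeg1.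
    by rewrite subr0.
  by have -> : (((U_(k))%MM + (U_(k))%MM)%MM == mm) = false by apply/negbTE/eqP => eU; move: dm; rewrite -eU d2 eqxx.
rewrite -T; apply: grI_gen.
  move=> A [R [rR cR ->]]; rewrite /evalmx /f mevalB mevalM mevalXU.
  case: (mxvec_indexP k) => i j; rewrite mxvecE mxE.
  by case: (_ \in R); rewrite ?mulr1 ?mulr0 subrr.
rewrite -msupp_eq0; apply/eqP => e; by rewrite e in in2.
Qed.

Definition PP n m r (q : Pnm n m) : Prop :=
  grI (vanI (Zrook r)) q \/
  exists R : {set 'I_n * 'I_m}, [/\ is_rook R, (#|R| <= r)%N & q = rookmon R].

Lemma PP_step n m r (k : 'I_(n * m)) (q : Pnm n m) : PP r q -> PP r ('X_k * q).
Proof.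
case=> [g|[R [rR cR ->]]]; first by left; apply: grIMl.
case: (mxvec_indexP k) => i j.
have Ex : 'X_(mxvec_index i j) = xvar i j :> Pnm n m by [].
rewrite Ex.
case: (boolP ((i, j) \in R)) => ijR.
  left; rewrite /rookmon (bigD1 (i, j)) //= mulrA mulrC.
  exact: square.
have Hs : xvar i j * rookmon R = rookmon ((i, j) |: R).
  by rewrite /rookmon big_setU1.
rewrite Hs.
case: (boolP (is_rook ((i, j) |: R) && (#|(i, j) |: R| <= r)%N)) => [/andP[H1 H2]|Hb].
  by right; exists ((i, j) |: R).
left; rewrite -[rookmon _]mul1r; apply: bad_set => R' rR' cR'.
apply/negP => sub; move: Hb; rewrite (is_rook_sub rR' sub) /=.
by rewrite -cR' subset_leq_card.
Qed.

Lemma PP_X n m r (mm : 'X_{1..(n * m)}) : PP r ('X_[mm] : Pnm n m).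
Proof.
rewrite mpolyXE_id.
suff H : forall s : seq 'I_(n * m), PP r (\prod_(i <- s) ('X_i : Pnm n m) ^+ mm i) by apply: H.
elim=> [|i s IH].
  by rewrite big_nil; right; exists set0; rewrite cards0 /rookmon big_set0; split=> //;
     apply/forall_inP => a; rewrite inE.
rewrite big_cons; elim: (mm i) => [|e IHe]; first by rewrite expr0 mul1r.
by rewrite exprS -mulrA; apply: PP_step.
Qed.

Theorem mainTheorem7 (n m r : nat) :
  (0 < n)%N -> (0 < m)%N -> (r <= minn n m)%N ->
  (forall p : Pnm n m,
     exists c : {set 'I_n * 'I_m} -> CC,
       grI (vanI (Zrook r))
           (p - \sum_(R : {set 'I_n * 'I_m} | is_rook R && (#|R| <= r)%N)
                  c R *: rookmon R)) /\
  (forall (d : nat) (p : Pnm n m),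
     (r < d)%N -> p \is d.-homog -> grI (vanI (Zrook r)) p).
Proof.
move=> _ _ _; split.
  pose Good (q : Pnm n m) := exists c : {set 'I_n * 'I_m} -> CC,
       grI (vanI (Zrook r))
           (q - \sum_(R : {set 'I_n * 'I_m} | is_rook R && (#|R| <= r)%N)
                  c R *: rookmon R).
  move=> p; rewrite [p]mpolyE; apply: (big_ind Good).
  - exists (fun _ => 0); rewrite big1 ?subr0; first exact: grI0.
    by move=> R _; rewrite scale0r.
  - move=> q1 q2 [c1 H1] [c2 H2]; exists (fun R => c1 R + c2 R).
    under eq_bigr do rewrite scalerDl.
    rewrite big_split /= opprD addrACA; exact: grID.
  move=> mm _; case: (PP_X r mm) => [g|[R [rR cR E]]].
    exists (fun _ => 0); rewrite big1 ?subr0; last by move=> R _; rewrite scale0r.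
    by rewrite -mul_mpolyC; apply: grIMl.
  exists (fun R' => if R' == R then p@_mm else 0).
  rewrite (bigD1 R) ?rR ?cR //= eqxx big1 ?addr0 -?E ?subrr; first exact: grI0.
  by move=> R' /andP[_ /negbTE ->]; rewrite scale0r.
move=> d p ltrd hp; rewrite [p]mpolyE big_seq; apply: big_ind.
- exact: grI0.
- by move=> ? ?; apply: grID.
move=> mm mmin; rewrite -mul_mpolyC; apply: grIMl.
case: (PP_X r mm) => [//|[R [rR cR E]]].
have dm : mdeg mm = d by apply: (dhomog_mf hp).
move: E; rewrite rookmonX => /(congr1 (@msupp _ _)); rewrite !msuppX => -[E].
by move: ltrd; rewrite -dm E mdeg_rmnm ltnNge cR.
Qed.
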